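(* Under the setting described in the context, let $m^*=(m_1^*,\dots,m_N^* )\in\prod_{i\in\mathcal N}\mathcal M_i$ be a Nash equilibrium of the game induced by the game form, and let $\hat a^*_i:=\hat a_i(m^* )$ and $\hat t^*_i:=\hat t_i(m^* )$ for $i\in\mathcal N$. Then: (a) (individual rationality) for every $i\in\mathcal N$, $u_i^A\big((\hat a^*_j)_{j\in\mathcal R_i},\hat t^*_i\big)\ \ge\ u_i^A(\mathbf 0,0)$; (b) $\big((\hat a^*_i)_{i\in\mathcal N},(\hat t^*_i)_{i\in\mathcal N}\big)$ is an optimal solution of the centralized problem $(P_C)$.
   Context: Let $N\ge 1$ and $\mathcal N=\{1,\dots,N\}$. For each $i\in\mathcal N$ a set $\mathcal R_i\subseteq\mathcal N$ with $i\in\mathcal R_i$ is given (the users affecting $i$); for $j\in\mathcal N$ put $\mathcal C_j=\{k\in\mathcal N: j\in\mathcal R_k\}$ (the users affected by $j$), and assume $|\mathcal C_j|\ge 3$ for all $j$. Each $\mathcal A_i\subset\mathbb R$ is a nonempty convex compact set with $0\in\mathcal A_i$. For each $i$, $u_i:\mathbb R^{\mathcal R_i}\to\mathbb R\cup\{-\infty\}$ is concave, is real-valued at every $a_{\mathcal R_i}=(a_k)_{k\in\mathcal R_i}$ with $a_i\in\mathcal A_i$, and equals $-\infty$ whenever $a_i\notin\mathcal A_i$. The aggregate utility of $i$ is $u_i^A(a_{\mathcal R_i},t_i)=-t_i+u_i(a_{\mathcal R_i})$ if $a_i\in\mathcal A_i$ and $-\infty$ otherwise ($t_i\in\mathbb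 R$ is a tax). Centralized problem $(P_C)$: maximize $\sum_{i\in\mathcal N}u_i^A(a_{\mathcal R_i},t_i)$ over $(a,t)\in\mathbb R^N\times\mathbb R^N$ subject to $\sum_i t_i=0$; equivalently maximize $\sum_i u_i(a_{\mathcal R_i})$ over the feasible set $\mathcal D=\{(a,t): a_i\in\mathcal A_i\ \forall i,\ \sum_i t_i=0\}$. Game form: user $i$'s message is $m_i=({}^ia_{\mathcal R_i},{}^i\pi_{\mathcal R_i})$ with ${}^ia_{\mathcal R_i}=({}^ia_k)_{k\in\mathcal R_i}\in\mathbb R^{\mathcal R_i}$ and ${}^i\pi_{\mathcal R_i}=({}^i\pi_k)_{k\in\mathcal R_i}\in\mathbb R_+^{\mathcal R_i}$; $\mathcal M_i=\mathbb R^{\mathcal R_i}\times\mathbb R_+^{\mathcal R_i}$. The action outcome is $\hat a_i(m)=\frac1{|\mathcal C_i|}\sum_{k\in\mathcal C_i}{}^ka_i$. For each $j$ fix a bijection $\mathcal I_{\cdot j}:\mathcal C_j\to\{1,\dots,|\mathcal C_j|\}$, write $\mathcal C_{j(k)}$ for the user of $\mathcal C_j$ with index $k$, indices taken cyclically modulo $|\mathcal C_j|$ (so $\mathcal C_{j(|\mathcal C_j|+1)}=\mathcal C_{j(1)}$ etc.). For $i\in\mathcal N$, $j\in\mathcal R_i$ (equivalently $i\in\mathcal C_j$) write $i^+=\mathcal C_{j(\mathcal I_{ij}+1)}$, $i^{++}=\mathcal C_{j(\mathcal I_{ij}+2)}$ (depending on $j$), and define $l_{ij}(m)={}^{i^+}\pi_j-{}^{i^{++}}\pi_j$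 and the tax $\hat t_i(m)=\sum_{j\in\mathcal R_i}\Big[l_{ij}(m)\,\hat a_j(m)+{}^i\pi_j\big({}^ia_j-{}^{i^+}a_j\big)^2-{}^{i^+}\pi_j\big({}^{i^+}a_j-{}^{i^{++}}a_j\big)^2\Big]$. A Nash equilibrium is $m^*\in\prod_i\mathcal M_i$ such that for all $i$ and all $m_i\in\mathcal M_i$, $u_i^A\big((\hat a_j(m^* ))_{j\in\mathcal R_i},\hat t_i(m^* )\big)\ge u_i^A\big((\hat a_j(m_i,m^*_{-i}))_{j\in\mathcal R_i},\hat t_i(m_i,m^*_{-i})\big)$, where $(m_i,m^*_{-i})$ replaces the $i$-th message of $m^*$ by $m_i$. *)

(* Defs.v *)
From Stdlib Require Import Reals List Arith ClassicalEpsilon.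
From Stdlib Require Export Rtopology.
Import ListNotations.
Open Scope R_scope.

(* Extended reals R ∪ {-∞}: Some x = x, None = -∞ *)
Definition ER := option R.
Definition ERle (x y : ER) : Prop :=
  match x, y with
  | None, _ => True
  | Some _, None => False
  | Some a, Some b => a <= b
  end.
Definition ERplus (x y : ER) : ER :=
  match x, y with Some a, Some b => Some (a + b) | _, _ => None end.

Definition sumN (N : nat) (f : nat -> R) : R := fold_right Rplus 0 (map f (seq 0 N)).
Definition sumN_if (N : nat) (P : nat -> bool) (f : nat -> R) : R :=
  fold_right Rplus 0 (map f (filter P (seq 0 N))).
Definition ERsumN (N : nat) (f : nat -> ER) : ER := fold_right ERplus (Some 0) (map f (seq 0 N)).

(* Rb i k = true  <->  k ∈ R_i.   C_j = { k : j ∈ R_k } *)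
Definition Cmem (Rb : nat -> nat -> bool) (j : nat) : nat -> bool := fun k => Rb k j.
Definition Ccard (N : nat) (Rb : nat -> nat -> bool) (j : nat) : nat :=
  length (filter (Cmem Rb j) (seq 0 N)).

Definition convex_set (A : R -> Prop) : Prop :=
  forall x y l, A x -> A y -> 0 <= l <= 1 -> A (l * x + (1 - l) * y).

(* aggregate utility u_i^A(a_{R_i}, t_i) with values in R ∪ {-∞};
   a is a full action profile, u i depends only on coordinates in R_i *)
Definition uA (A : nat -> R -> Prop) (u : nat -> (nat -> R) -> R)
  (i : nat) (a : nat -> R) (t : R) : ER :=
  if excluded_middle_informative (A i (a i)) then Some (- t + u i a) else None.

(* action outcome  â_i(m) = 1/|C_i| Σ_{k∈C_i} ^k a_i ;  ma k j = ^k a_j *)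
Definition ahat (N : nat) (Rb : nat -> nat -> bool) (ma : nat -> nat -> R) (i : nat) : R :=
  / INR (Ccard N Rb i) * sumN_if N (Cmem Rb i) (fun k => ma k i).

(* cyclic ordering of C_j: ordr j enumerates C_j, position p ↦ index p+1 *)
Fixpoint index_of (x : nat) (l : list nat) : nat :=
  match l with
  | [] => 0
  | y :: l' => if Nat.eqb x y then 0 else S (index_of x l')
  end.
(* the user s steps after i in the cyclic order of l (s = 1 : i^+, s = 2 : i^{++}) *)
Definition cyc (l : list nat) (i s : nat) : nat :=
  nth ((index_of i l + s) mod length l) l 0%nat.

(* tax  t̂_i(m);  mp k j = ^k π_j *)
Definition that (N : nat) (Rb : nat -> nat -> bool) (ordr : nat -> list nat)
  (ma mp : nat -> nat -> R) (i : nat) : R :=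
  sumN_if N (Rb i) (fun j =>
    let ip := cyc (ordr j) i 1 in
    let ipp := cyc (ordr j) i 2 in
    (mp ip j - mp ipp j) * ahat N Rb ma j
    + mp i j * (ma i j - ma ip j) ^ 2
    - mp ip j * (ma ip j - ma ipp j) ^ 2).

Definition dev (m : nat -> nat -> R) (i : nat) (row : nat -> R) : nat -> nat -> R :=
  fun k => if Nat.eqb k i then row else m k.

(* m_i ∈ M_i : prices nonnegative on R_i *)
Definition msg_ok (Rb : nat -> nat -> bool) (i : nat) (pi_row : nat -> R) : Prop :=
  forall k, Rb i k = true -> 0 <= pi_row k.

Definition is_NE (N : nat) (Rb : nat -> nat -> bool) (ordr : nat -> list nat)
  (A : nat -> R -> Prop) (u : nat -> (nat -> R) -> R) (ma mp : nat -> nat -> R) : Prop :=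
  (forall i, (i < N)%nat -> msg_ok Rb i (mp i)) /\
  forall i, (i < N)%nat -> forall (ra rp : nat -> R), msg_ok Rb i rp ->
    ERle (uA A u i (ahat N Rb (dev ma i ra)) (that N Rb ordr (dev ma i ra) (dev mp i rp) i))
         (uA A u i (ahat N Rb ma) (that N Rb ordr ma mp i)).

Definition PC_obj (N : nat) (A : nat -> R -> Prop) (u : nat -> (nat -> R) -> R)
  (a t : nat -> R) : ER := ERsumN N (fun i => uA A u i a (t i)).

Definition PC_optimal (N : nat) (A : nat -> R -> Prop) (u : nat -> (nat -> R) -> R)
  (a t : nat -> R) : Prop :=
  ((forall i, (i < N)%nat -> A i (a i)) /\ sumN N t = 0) /\
  forall a' t' : nat -> R, sumN N t' = 0 -> ERle (PC_obj N A u a' t') (PC_obj N A u a t).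

(* Main.v *)
Require Import Defs.
From Stdlib Require Import Reals List Arith ClassicalEpsilon Rtopology.
From Stdlib Require Import Lia Lra Permutation Classical.
Import ListNotations.
Open Scope R_scope.

Definition S_ (l : list nat) (f : nat -> R) : R := fold_right Rplus 0 (map f l).

Lemma S_nil f : S_ [] f = 0. Proof. reflexivity. Qed.
Lemma S_cons a l f : S_ (a :: l) f = f a + S_ l f. Proof. reflexivity. Qed.

Lemma S_app l1 l2 f : S_ (l1 ++ l2) f = S_ l1 f + S_ l2 f.
Proof. induction l1; [unfold S_; simpl; lra|]. change (S_ (a :: (l1 ++ l2)) f = S_ (a :: l1) f + S_ l2 f). rewrite !S_cons, IHl1; lra. Qed.

Lemma S_ext l f g : (forall x, In x l -> f x = g x) -> S_ l f = S_ l g.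
Proof. induction l; intros H; [reflexivity|]. rewrite !S_cons, H, IHl; auto; [intros; apply H|]; simpl; auto. Qed.

Lemma S_plus l f g : S_ l (fun x => f x + g x) = S_ l f + S_ l g.
Proof. induction l; [simpl; unfold S_; simpl; lra|]. rewrite !S_cons, IHl; lra. Qed.

Lemma S_minus l f g : S_ l (fun x => f x - g x) = S_ l f - S_ l g.
Proof. induction l; [unfold S_; simpl; lra|]. rewrite !S_cons, IHl; lra. Qed.

Lemma S_zero l : S_ l (fun _ => 0) = 0.
Proof. induction l; [reflexivity|]. rewrite S_cons, IHl; lra. Qed.

Lemma S_le l f g : (forall x, In x l -> f x <= g x) -> S_ l f <= S_ l g.
Proof. induction l; intros H; [unfold S_; simpl; lra|]. rewrite !S_cons.
  assert (f a <= g a) by (apply H; simpl; auto).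
  assert (S_ l f <= S_ l g) by (apply IHl; intros; apply H; simpl; auto). lra. Qed.

Lemma S_perm l l' f : Permutation l l' -> S_ l f = S_ l' f.
Proof. induction 1; rewrite ?S_cons; try lra. Qed.

Lemma S_filter (P : nat -> bool) l f : S_ (filter P l) f = S_ l (fun x => if P x then f x else 0).
Proof. induction l; [reflexivity|]. cbn [filter]. rewrite S_cons. destruct (P a); rewrite ?S_cons, IHl; lra. Qed.

Lemma S_swap l1 l2 (F : nat -> nat -> R) :
  S_ l1 (fun i => S_ l2 (fun j => F i j)) = S_ l2 (fun j => S_ l1 (fun i => F i j)).
Proof. induction l1.
  - rewrite S_nil, S_zero. reflexivity.
  - rewrite S_cons, IHl1. rewrite <- S_plus. apply S_ext. intros. rewrite S_cons. reflexivity. Qed.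

Lemma S_upd l i x f : NoDup l -> In i l ->
  S_ l (fun k => if Nat.eqb k i then x else f k) = S_ l f - f i + x.
Proof. induction l; intros Hn Hi; [destruct Hi|]. inversion Hn; subst. rewrite !S_cons.
  destruct Hi as [->|Hi].
  - rewrite Nat.eqb_refl. rewrite (S_ext l _ f). lra. intros y Hy.
    destruct (Nat.eqb_spec y i); [subst; contradiction|reflexivity].
  - rewrite IHl; auto. destruct (Nat.eqb_spec a i); [subst; contradiction|lra]. Qed.

Lemma index_of_spec i l : In i l -> (index_of i l < length l)%nat /\ nth (index_of i l) l 0%nat = i.
Proof. induction l; intros H; [destruct H|]. simpl. destruct (Nat.eqb_spec i a).
  - subst; split; [lia|reflexivity].
  - destruct H as [H|H]; [subst; congruence|]. destruct (IHl H); split; [lia|auto]. Qed.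

Lemma index_of_nth l p : NoDup l -> (p < length l)%nat -> index_of (nth p l 0%nat) l = p.
Proof. revert p; induction l; intros p Hn Hp; simpl in Hp; [lia|]. inversion Hn; subst.
  destruct p; simpl. - rewrite Nat.eqb_refl; reflexivity.
  - destruct (Nat.eqb_spec (nth p l 0%nat) a).
    + exfalso. apply H1. rewrite <- e. apply nth_In. lia.
    + rewrite IHl; auto. lia. Qed.
Lemma cyc_nth l p s : NoDup l -> (p < length l)%nat -> cyc l (nth p l 0%nat) s = nth ((p + s) mod length l) l 0%nat.
Proof. intros. unfold cyc. rewrite index_of_nth; auto. Qed.

Lemma S_index l F : S_ l F = S_ (seq 0 (length l)) (fun p => F (nth p l 0%nat)).
Proof. induction l; [reflexivity|]. change (length (a :: l)) with (S (length l)). change (seq 0 (S (length l))) with (0%nat :: seq 1 (length l)). rewrite !S_cons. simpl nth at 1.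
  rewrite IHl. f_equal. rewrite <- seq_shift. unfold S_ at 2. rewrite map_map. reflexivity. Qed.

Lemma S_seq_shift m h : S_ (seq 0 m) (fun x => h (S x)) + h 0%nat = S_ (seq 0 m) h + h m.
Proof. induction m; [unfold S_; simpl; lra|]. rewrite !seq_S, !S_app, !S_cons, !S_nil. simpl (0 + m)%nat. lra. Qed.

Lemma rot1 n h : (1 <= n)%nat -> S_ (seq 0 n) (fun p => h ((p + 1) mod n)%nat) = S_ (seq 0 n) h.
Proof. intros Hn. destruct n as [|m]; [lia|]. rewrite !seq_S, !S_app, !S_cons, !S_nil.
  rewrite (S_ext _ _ (fun x => h (S x))).
  - replace ((0 + m + 1) mod S m)%nat with 0%nat. pose proof (S_seq_shift m h). simpl (0+m)%nat. lra.
    replace (0 + m + 1)%nat with (0 + 1 * S m)%nat by lia. rewrite Nat.Div0.mod_add. rewrite Nat.mod_small; lia.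
  - intros x Hx. apply in_seq in Hx. rewrite Nat.mod_small by lia. f_equal; lia. Qed.

Lemma tele l F : NoDup l -> (1 <= length l)%nat -> S_ l (fun i => F i - F (cyc l i 1)) = 0.
Proof. intros Hn Hl. rewrite S_index. rewrite (S_ext _ _ (fun p => F (nth p l 0%nat) - F (nth ((p+1) mod length l) l 0%nat))).
  - rewrite S_minus. rewrite (rot1 _ (fun q => F (nth q l 0%nat))); auto. lra.
  - intros p Hp. apply in_seq in Hp. rewrite cyc_nth; auto. lia. Qed.

Lemma cyc_in l i s : In i l -> In (cyc l i s) l.
Proof. intros H. unfold cyc. apply nth_In. apply Nat.mod_upper_bound. destruct l; [destruct H|simpl; lia]. Qed.

Lemma cyc_cyc l i : NoDup l -> In i l -> cyc l (cyc l i 1) 1 = cyc l i 2.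
Proof. intros Hn Hi. destruct (index_of_spec i l Hi) as [Hlt Heq].
  assert (length l <> 0%nat) by lia.
  unfold cyc at 2. rewrite cyc_nth; auto. unfold cyc. f_equal.
  rewrite Nat.Div0.add_mod_idemp_l. f_equal. lia. apply Nat.mod_upper_bound; auto. Qed.

Lemma cyc_neq l i s : NoDup l -> In i l -> (3 <= length l)%nat -> (1 <= s <= 2)%nat -> cyc l i s <> i.
Proof. intros Hn Hi Hl Hs. destruct (index_of_spec i l Hi) as [Hlt Heq].
  unfold cyc. intros E. rewrite <- Heq in E at 2.
  set (p := index_of i l) in *. set (n := length l) in *.
  assert (Hm : ((p + s) mod n < n)%nat) by (apply Nat.mod_upper_bound; lia).
  pose proof (proj1 (NoDup_nth l 0%nat) Hn _ _ Hm Hlt E) as E2.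
  destruct (Nat.lt_ge_cases (p + s) n).
  - rewrite Nat.mod_small in E2 by lia. lia.
  - replace (p + s)%nat with (p + s - n + 1 * n)%nat in E2 by lia.
    rewrite Nat.Div0.mod_add, Nat.mod_small in E2 by lia. lia. Qed.

Lemma ERsum_some l (f : nat -> ER) g : (forall i, In i l -> f i = Some (g i)) -> fold_right ERplus (Some 0) (map f l) = Some (S_ l g).
Proof. induction l; intros H; [reflexivity|]. simpl. rewrite IHl, H; simpl; auto. intros; apply H; simpl; auto. Qed.

Lemma ERsum_none l (f : nat -> ER) i : In i l -> f i = None -> fold_right ERplus (Some 0) (map f l) = None.
Proof. induction l; intros Hi Hf; [destruct Hi|]. simpl. destruct Hi as [->|Hi].
  - rewrite Hf. reflexivity.
  - rewrite (IHl Hi Hf). destruct (f a); reflexivity. Qed.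

Lemma S_opp l f : S_ l (fun x => - f x) = - S_ l f.
Proof. induction l; [unfold S_; simpl; lra|]. rewrite !S_cons, IHl; lra. Qed.

Lemma sumN_if_S N P f : sumN_if N P f = S_ (filter P (seq 0 N)) f.
Proof. reflexivity. Qed.
Lemma sumN_S N f : sumN N f = S_ (seq 0 N) f.
Proof. reflexivity. Qed.
Theorem theorem1
  (N : nat) (Rb : nat -> nat -> bool) (ordr : nat -> list nat)
  (A : nat -> R -> Prop) (u : nat -> (nat -> R) -> R)
  (ma mp : nat -> nat -> R)
  (HN : (1 <= N)%nat)
  (HRself : forall i, (i < N)%nat -> Rb i i = true)
  (HC3 : forall j, (j < N)%nat -> (3 <= Ccard N Rb j)%nat)
  (Hord_nodup : forall j, (j < N)%nat -> NoDup (ordr j))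
  (Hord_enum : forall j, (j < N)%nat ->
     forall k, In k (ordr j) <-> ((k < N)%nat /\ Rb k j = true))
  (HAne : forall i, (i < N)%nat -> exists x, A i x)
  (HAconv : forall i, (i < N)%nat -> convex_set (A i))
  (HAcomp : forall i, (i < N)%nat -> compact (A i))
  (HA0 : forall i, (i < N)%nat -> A i 0)
  (Hu_local : forall i, (i < N)%nat -> forall a b : nat -> R,
     (forall k, (k < N)%nat -> Rb i k = true -> a k = b k) -> u i a = u i b)
  (Hu_concave : forall i, (i < N)%nat -> forall (a b : nat -> R) (l : R),
     A i (a i) -> A i (b i) -> 0 <= l <= 1 ->
     l * u i a + (1 - l) * u i b <= u i (fun k => l * a k + (1 - l) * b k))
  (HNE : is_NE N Rb ordr A u ma mp) :
  (forall i, (i < N)%nat ->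
     ERle (uA A u i (fun _ => 0) 0)
          (uA A u i (ahat N Rb ma) (that N Rb ordr ma mp i)))
  /\ PC_optimal N A u (ahat N Rb ma) (that N Rb ordr ma mp).
Proof.
  destruct HNE as [Hok HNE'].
  assert (Hlen : forall j, (j < N)%nat -> (3 <= length (ordr j))%nat).
  { intros j Hj. eapply Nat.le_trans; [apply (HC3 j Hj)|]. unfold Ccard.
    apply NoDup_incl_length. apply NoDup_filter, seq_NoDup.
    intros x Hx. apply filter_In in Hx as [Hx1 Hx2]. apply in_seq in Hx1.
    apply Hord_enum; auto. split; [lia|exact Hx2]. }
  assert (Hperm : forall j, (j < N)%nat -> Permutation (filter (Cmem Rb j) (seq 0 N)) (ordr j)).
  { intros j Hj. apply NoDup_Permutation. apply NoDup_filter, seq_NoDup. auto.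
    intros x. rewrite filter_In, in_seq, Hord_enum by auto. unfold Cmem. split; intros [? ?]; split; auto; lia. }
  assert (Hcmem : forall j, (j < N)%nat -> forall i s, In i (ordr j) ->
     (cyc (ordr j) i s < N)%nat /\ Rb (cyc (ordr j) i s) j = true).
  { intros j Hj i s Hi. apply Hord_enum; auto. apply cyc_in; auto. }
  assert (Hpos : forall k j, (k < N)%nat -> Rb k j = true -> 0 <= mp k j).
  { intros k j Hk Hr. apply (Hok k Hk j Hr). }
  assert (Htele : forall (G F : nat -> nat -> R),
     (forall j, (j < N)%nat -> forall i, In i (ordr j) -> G i j = F j i - F j (cyc (ordr j) i 1)) ->
     S_ (seq 0 N) (fun i => S_ (filter (Rb i) (seq 0 N)) (fun j => G i j)) = 0).
  { intros G F HG.
    rewrite (S_ext _ _ (fun i => S_ (seq 0 N) (fun j => if Rb i j then G i j else 0)))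
      by (intros; apply S_filter).
    rewrite S_swap. transitivity (S_ (seq 0 N) (fun _ => 0)); [|apply S_zero]. apply S_ext. intros j Hj. apply in_seq in Hj.
    transitivity (S_ (filter (Cmem Rb j) (seq 0 N)) (fun i => G i j)).
    { rewrite S_filter. reflexivity. }
    rewrite (S_perm _ _ _ (Hperm j ltac:(lia))).
    rewrite (S_ext _ _ (fun i => F j i - F j (cyc (ordr j) i 1))) by (intros; apply HG; auto; lia).
    apply tele. apply Hord_nodup; lia. pose proof (Hlen j ltac:(lia)). lia. }
  assert (Hkey : forall i, (i < N)%nat -> forall b : nat -> R, A i (b i) ->
     A i (ahat N Rb ma i) /\
     - S_ (filter (Rb i) (seq 0 N)) (fun j =>
          (mp (cyc (ordr j) i 1) j - mp (cyc (ordr j) i 2) j) * b j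
          - mp (cyc (ordr j) i 1) j * (ma (cyc (ordr j) i 1) j - ma (cyc (ordr j) i 2) j) ^ 2)
       + u i b <= - that N Rb ordr ma mp i + u i (ahat N Rb ma)).
  { intros i Hi b Hb.
    pose (ra := fun j => INR (Ccard N Rb j) * b j - (S_ (filter (Cmem Rb j) (seq 0 N)) (fun k => ma k j) - ma i j)).
    pose (rp := fun _ : nat => 0).
    assert (Hah : forall j, (j < N)%nat -> Rb i j = true -> ahat N Rb (dev ma i ra) j = b j).
    { intros j Hj Hr. unfold ahat. rewrite sumN_if_S.
      rewrite (S_ext _ _ (fun k => if Nat.eqb k i then ra j else ma k j))
        by (intros k _; unfold dev; destruct (Nat.eqb k i); reflexivity).
      rewrite S_upd. 2: apply NoDup_filter, seq_NoDup.
      2: { apply filter_In. split; [apply in_seq; lia|exact Hr]. }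
      unfold ra. field. apply not_0_INR. pose proof (HC3 j Hj). lia. }
    specialize (HNE' i Hi ra rp (fun _ _ => Rle_refl 0)).
    assert (Htax : that N Rb ordr (dev ma i ra) (dev mp i rp) i =
       S_ (filter (Rb i) (seq 0 N)) (fun j =>
          (mp (cyc (ordr j) i 1) j - mp (cyc (ordr j) i 2) j) * b j
          - mp (cyc (ordr j) i 1) j * (ma (cyc (ordr j) i 1) j - ma (cyc (ordr j) i 2) j) ^ 2)).
    { unfold that. rewrite sumN_if_S. apply S_ext. intros j Hj.
      apply filter_In in Hj as [Hj1 Hj2]. apply in_seq in Hj1.
      assert (Hin : In i (ordr j)) by (apply Hord_enum; [lia|split; auto]).
      assert (n1 : cyc (ordr j) i 1 <> i) by (apply cyc_neq; [apply Hord_nodup; lia|auto|apply Hlen; lia|lia]).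
      assert (n2 : cyc (ordr j) i 2 <> i) by (apply cyc_neq; [apply Hord_nodup; lia|auto|apply Hlen; lia|lia]).
      cbv zeta. unfold dev. rewrite Nat.eqb_refl, (proj2 (Nat.eqb_neq _ _) n1), (proj2 (Nat.eqb_neq _ _) n2).
      rewrite Hah by (auto; lia). unfold rp. try ring. }
    assert (Hub : u i (ahat N Rb (dev ma i ra)) = u i b).
    { apply Hu_local; auto. }
    assert (HAb : A i (ahat N Rb (dev ma i ra) i)) by (rewrite Hah; auto).
    rewrite Htax in HNE'. unfold uA in HNE'. rewrite Hub in HNE'.
    destruct (excluded_middle_informative (A i (ahat N Rb (dev ma i ra) i))) as [_|h]; [|contradiction].
    destruct (excluded_middle_informative (A i (ahat N Rb ma i))) as [h2|h2]; simpl in HNE'; [|contradiction].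
    split; auto. }
  assert (HQ'pos : forall i j, (i < N)%nat -> In j (filter (Rb i) (seq 0 N)) ->
     0 <= mp (cyc (ordr j) i 1) j * (ma (cyc (ordr j) i 1) j - ma (cyc (ordr j) i 2) j) ^ 2).
  { intros i j Hi Hj. apply filter_In in Hj as [Hj1 Hj2]. apply in_seq in Hj1.
    assert (Hin : In i (ordr j)) by (apply Hord_enum; [lia|split; auto]).
    destruct (Hcmem j ltac:(lia) i 1%nat Hin). apply Rmult_le_pos; [apply Hpos; auto|apply pow2_ge_0]. }
  assert (HQpos : forall i j, (i < N)%nat -> In j (filter (Rb i) (seq 0 N)) ->
     0 <= mp i j * (ma i j - ma (cyc (ordr j) i 1) j) ^ 2).
  { intros i j Hi Hj. apply filter_In in Hj as [Hj1 Hj2].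
    apply Rmult_le_pos; [apply Hpos; auto|apply pow2_ge_0]. }
  assert (Hkey2 : forall i, (i < N)%nat -> forall b : nat -> R, A i (b i) ->
     u i b - S_ (filter (Rb i) (seq 0 N)) (fun j =>
          (mp (cyc (ordr j) i 1) j - mp (cyc (ordr j) i 2) j) * b j)
     <= u i (ahat N Rb ma) - S_ (filter (Rb i) (seq 0 N)) (fun j =>
          (mp (cyc (ordr j) i 1) j - mp (cyc (ordr j) i 2) j) * ahat N Rb ma j)).
  { intros i Hi b Hb. destruct (Hkey i Hi b Hb) as [_ H].
    unfold that in H. rewrite sumN_if_S in H. cbv zeta in H. rewrite S_minus in H.
    rewrite (S_minus _ (fun j => (mp (cyc (ordr j) i 1) j - mp (cyc (ordr j) i 2) j) * ahat N Rb ma j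
        + mp i j * (ma i j - ma (cyc (ordr j) i 1) j) ^ 2)) in H.
    rewrite S_plus in H.
    assert (0 <= S_ (filter (Rb i) (seq 0 N)) (fun j => mp i j * (ma i j - ma (cyc (ordr j) i 1) j) ^ 2)).
    { eapply Rle_trans; [right; symmetry; apply (S_zero (filter (Rb i) (seq 0 N)))|]. apply S_le. intros; apply HQpos; auto. }
    lra. }
  assert (HLz : forall x : nat -> R, S_ (seq 0 N) (fun i => S_ (filter (Rb i) (seq 0 N)) (fun j =>
          (mp (cyc (ordr j) i 1) j - mp (cyc (ordr j) i 2) j) * x j)) = 0).
  { intros x. apply (Htele _ (fun j i => mp (cyc (ordr j) i 1) j * x j)).
    intros j Hj i Hi. rewrite cyc_cyc; auto. ring. }
  assert (Hfeas : forall i, (i < N)%nat -> A i (ahat N Rb ma i)).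
  { intros i Hi. exact (proj1 (Hkey i Hi (fun _ => 0) (HA0 i Hi))). }
  split.
  - intros i Hi. destruct (Hkey i Hi (fun _ => 0) (HA0 i Hi)) as [HA H].
    unfold uA. destruct (excluded_middle_informative (A i 0)) as [_|h]; [|exact I].
    destruct (excluded_middle_informative (A i (ahat N Rb ma i))) as [_|h]; [|contradiction].
    simpl.
    assert (S_ (filter (Rb i) (seq 0 N)) (fun j =>
          (mp (cyc (ordr j) i 1) j - mp (cyc (ordr j) i 2) j) * 0
          - mp (cyc (ordr j) i 1) j * (ma (cyc (ordr j) i 1) j - ma (cyc (ordr j) i 2) j) ^ 2) <= 0).
    { eapply Rle_trans; [|right; apply (S_zero (filter (Rb i) (seq 0 N)))]. apply S_le. intros j Hj.
      pose proof (HQ'pos i j Hi Hj). lra. }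
    lra.
  - split; [split|].
    + exact Hfeas.
    + rewrite sumN_S. unfold that. 
      apply (Htele _ (fun j i => mp (cyc (ordr j) i 1) j * ahat N Rb ma j + mp i j * (ma i j - ma (cyc (ordr j) i 1) j) ^ 2)).
      intros j Hj i Hi. rewrite cyc_cyc; auto. ring.
    + intros a' t' Ht'. unfold PC_obj, ERsumN.
      destruct (classic (forall i, (i < N)%nat -> A i (a' i))) as [Hall|Hn].
      * rewrite (ERsum_some _ _ (fun i => - t' i + u i a')).
        2: { intros i Hi. apply in_seq in Hi. unfold uA.
             destruct (excluded_middle_informative (A i (a' i))) as [_|h]; [reflexivity|].
             exfalso; apply h, Hall; lia. }
        rewrite (ERsum_some _ _ (fun i => - that N Rb ordr ma mp i + u i (ahat N Rb ma))).
        2: { intros i Hi. apply in_seq in Hi. unfold uA.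
             destruct (excluded_middle_informative (A i (ahat N Rb ma i))) as [_|h]; [reflexivity|].
             exfalso; apply h, Hfeas; lia. }
        simpl. rewrite !S_plus, !S_opp. rewrite sumN_S in Ht'.
        assert (Hb : S_ (seq 0 N) (that N Rb ordr ma mp) = 0).
        { unfold that. apply (Htele _ (fun j i => mp (cyc (ordr j) i 1) j * ahat N Rb ma j + mp i j * (ma i j - ma (cyc (ordr j) i 1) j) ^ 2)).
          intros j Hj i Hi. rewrite cyc_cyc; auto. ring. }
        assert (Hs := S_le (seq 0 N) _ _ (fun i Hi => Hkey2 i (proj2 (proj1 (in_seq _ _ _) Hi)) a' (Hall i (proj2 (proj1 (in_seq _ _ _) Hi))))).
        rewrite !S_minus, !HLz in Hs. lra.
      * apply not_all_ex_not in Hn as [i Hi].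
        assert (Hi1 : (i < N)%nat) by (apply NNPP; intros C; apply Hi; intros; contradiction).
        assert (Hi2 : ~ A i (a' i)) by (intros C; apply Hi; intros; exact C).
        rewrite (ERsum_none _ _ i). exact I. apply in_seq; lia.
        unfold uA. destruct (excluded_middle_informative (A i (a' i))); [contradiction|reflexivity].
Qed.
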